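(* Let $G=(V,E)$ be a graph with a string representation $\varphi$ in the plane. Let $\pi_1$ and $\pi_2$ be two internally disjoint curves with endpoints $a$ and $b$, let $F$ be the closed face of $\mathbb{R}^2\setminus(\pi_1\cup\pi_2)$ containing the string of the vertex occupied by the robber, and let $D$ be the connected component of $G_F$ containing the robber's vertex. If $\pi_1$ and $\pi_2$ are shortest curves relative to $D$, each guarded by five cops, then the robber is confined to $D$.
   Context: A string representation assigns to each vertex $v$ a bounded curve $\varphi(v)\subseteq\mathbb{R}^2$ with distinct $u,v$ adjacent iff $\varphi(u)\cap\varphi(v)\ne\emptyset$. A face of $\mathbb{R}^2\setminus X$ is an arc-connected component, a closed face its closure. For $X\subseteq\mathbb{R}^2$, a vertex $v$ is contained in $X$ if $\varphi(v)\subseteq\mathrm{int}(X)$, and $G_X$ is the subgraph induced by vertices contained in $X$. A path $P$ is a shortest path relative to $D\subseteq V$ if it is shortest in $G[P\cup D]$. For such $P$ from $u$ to $v$ and points $A\in\varphi(u)$, $B\in\varphi(v)$, a curve $\pi\subseteq\bigcup_{p\in P}\varphi(p)$ from $A$ to $B$ whose intersection with each $\varphi(p)$ is connected, these intersections occurring along $\pi$ in the order of $P$, is a shortest curve of $P$ relative to $D$; a shortest curve relative to $D$ is one for some shortest path relative to $D$. Guarding a shortest curve $\pi$ means guarding $N[P]$ for the corresponding path $P$, i.e. the cops' strategy ensures the robber is immediately captured upon moving to any vertex of $N[P]$. The robber is confined to $D$ if he is immediately captured upon moving to any vertex outside $D$. (Game: cops and robber alternate, each staying or moving along an edge; capture when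 a cop is on the robber's vertex.) *)

(* Defs.v *)
From HB Require Import structures.
From mathcomp Require Import all_boot all_order all_algebra.
From mathcomp Require Import all_classical all_reals all_analysis.
From Stdlib Require Import Relations.
Set Implicit Arguments. Unset Strict Implicit. Unset Printing Implicit Defensive.
Import Order.TTheory GRing.Theory Num.Theory.
Import numFieldNormedType.Exports.
Local Open Scope classical_set_scope.
Local Open Scope ring_scope.

Notation I01 := (`[0%R, 1%R]%classic).


Definition curve_from {R : realType} (C : set (R * R)) (A B : R * R) : Prop :=
  exists f : R -> R * R, {within I01, continuous f} /\
    f @` I01 = C /\ f 0%R = A /\ f 1%R = B.

Definition is_curve {R : realType} (C : set (R * R)) : Prop :=
  exists A B, curve_from C A B.

Definition arc_joined {R : realType} (Y : set (R * R)) (x y : R * R) : Prop :=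
  exists f : R -> R * R, {within I01, continuous f} /\
    f 0%R = x /\ f 1%R = y /\ f @` I01 `<=` Y.

Definition is_face {R : realType} (X Phi : set (R * R)) : Prop :=
  exists x, ~ X x /\ Phi = [set y | arc_joined (~` X) x y].

Definition is_closed_face {R : realType} (X F : set (R * R)) : Prop :=
  exists Phi, is_face X Phi /\ F = closure Phi.

Definition string_rep {R : realType} {T : finType} (adj : rel T)
    (phi : T -> set (R * R)) : Prop :=
  (forall v, is_curve (phi v)) /\
  (forall u v, u <> v -> (adj u v <-> phi u `&` phi v !=set0)).

Definition contained {R : realType} {T : finType} (phi : T -> set (R * R))
    (X : set (R * R)) (v : T) : Prop :=
  phi v `<=` interior X.

(** The connected component of G_X containing r0 (vertex set). *)
Definition component {R : realType} {T : finType} (adj : rel T)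
    (phi : T -> set (R * R)) (X : set (R * R)) (r0 : T) : T -> Prop :=
  fun x => contained phi X r0 /\
    clos_refl_trans T
      (fun y z => adj y z /\ contained phi X y /\ contained phi X z) r0 x.

Definition walk_in {T : finType} (adj : rel T) (S : T -> Prop) (u v : T)
    (p : seq T) : Prop :=
  exists s, p = u :: s /\ path adj u s /\ last u s = v /\
    (forall x, x \in p -> S x).

Definition shortest_rel {T : finType} (adj : rel T) (D : T -> Prop)
    (P : seq T) (u v : T) : Prop :=
  walk_in adj (fun x => x \in P \/ D x) u v P /\
  forall Q, walk_in adj (fun x => x \in P \/ D x) u v Q -> (size P <= size Q)%N.

Definition shortest_curve_of {R : realType} {T : finType} (adj : rel T)
    (phi : T -> set (R * R)) (D : T -> Prop) (P : seq T)
    (pi : set (R * R)) (A B : R * R) : Prop :=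
  exists u v, shortest_rel adj D P u v /\ phi u A /\ phi v B /\
  exists f : R -> R * R, {within I01, continuous f} /\
    f @` I01 = pi /\ f 0%R = A /\ f 1%R = B /\
    (forall z, pi z -> exists p, p \in P /\ phi p z) /\
    (forall p, p \in P -> connected (pi `&` phi p)) /\
    (* the intersections occur along pi in the order of P *)
    (forall i j, (i < j < size P)%N ->
       (forall s, I01 s -> phi (nth u P j) (f s) ->
          exists s0, I01 s0 /\ phi (nth u P i) (f s0) /\ s0 <= s) /\
       (forall s, I01 s -> phi (nth u P i) (f s) ->
          exists s1, I01 s1 /\ phi (nth u P j) (f s1) /\ s <= s1)).

Definition closed_nbhd {T : finType} (adj : rel T) (P : seq T) (x : T) : Prop :=
  x \in P \/ exists p, p \in P /\ adj p x.

(* Positions at time t: cops c t : {ffun 'I_k -> T}, robber r t.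
   Round t: the cops move (c t -> c t.+1, according to the strategy sigma
   applied to the history), then the robber moves (r t -> r t.+1).
   Time 0 is the current moment of the game. *)

Definition history {T : finType} {k : nat} (c : nat -> {ffun 'I_k -> T})
    (r : nat -> T) (t : nat) : seq ({ffun 'I_k -> T} * T) :=
  [seq (c i, r i) | i <- iota 0 t.+1].

Definition consistent {T : finType} {k : nat} (adj : rel T)
    (sigma : seq ({ffun 'I_k -> T} * T) -> {ffun 'I_k -> T})
    (c0 : {ffun 'I_k -> T}) (r0 : T)
    (c : nat -> {ffun 'I_k -> T}) (r : nat -> T) : Prop :=
  c 0%N = c0 /\ r 0%N = r0 /\
  forall t, c t.+1 = sigma (history c r t) /\
    (forall i, c t.+1 i = c t i \/ adj (c t i) (c t.+1 i)) /\
    (r t.+1 = r t \/ adj (r t) (r t.+1)).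

(** No capture has happened up to (and including) the cops' move of round t. *)
Definition free {T : finType} {k : nat} (c : nat -> {ffun 'I_k -> T})
    (r : nat -> T) (t : nat) : Prop :=
  forall s, (s <= t)%N -> forall i, c s i <> r s /\ c s.+1 i <> r s.

(** The robber, having moved to r t.+1 in round t, is captured immediately
    (by a cop of C): either he stepped onto that cop, or that cop catches him
    at the cops' next move. *)
Definition imm_captured {T : finType} {k : nat} (C : {set 'I_k})
    (c : nat -> {ffun 'I_k -> T}) (r : nat -> T) (t : nat) : Prop :=
  exists i, i \in C /\ (c t.+1 i = r t.+1 \/ c t.+2 i = r t.+1).

Definition guards {T : finType} {k : nat} (adj : rel T)
    (sigma : seq ({ffun 'I_k -> T} * T) -> {ffun 'I_k -> T})
    (c0 : {ffun 'I_k -> T}) (r0 : T) (C : {set 'I_k}) (S : T -> Prop) : Prop :=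
  forall c r, consistent adj sigma c0 r0 c r ->
  forall t, free c r t -> r t.+1 <> r t -> S (r t.+1) -> imm_captured C c r t.

Definition confined {T : finType} {k : nat} (adj : rel T)
    (sigma : seq ({ffun 'I_k -> T} * T) -> {ffun 'I_k -> T})
    (c0 : {ffun 'I_k -> T}) (r0 : T) (D : T -> Prop) : Prop :=
  forall c r, consistent adj sigma c0 r0 c r ->
  forall t, free c r t -> ~ D (r t.+1) -> imm_captured [set: 'I_k] c r t.

(* Main.v *)
Require Import Defs.
From HB Require Import structures.
From mathcomp Require Import all_boot all_order all_algebra.
From mathcomp Require Import all_classical all_reals all_analysis.
Import Order.TTheory GRing.Theory Num.Theory.
Import numFieldNormedType.Exports.
Local Open Scope classical_set_scope.
Local Open Scope ring_scope.

From mathcomp Require Import ring lra.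
From Stdlib Require Import Relation_Operators.
Set Implicit Arguments. Unset Strict Implicit. Unset Printing Implicit Defensive.
Lemma within_comp (R : realType) {U : topologicalType} (A : set R) (m : R -> R)
  (f : R -> U) : continuous m -> (forall t, A t -> A (m t)) ->
  {within A, continuous f} -> {within A, continuous (f \o m)}.
Proof.
move=> cm Am cf; apply/(@subspace_continuousP _ A _ (f \o m)) => x Ax.
have hf := (@subspace_continuousP _ A _ f).1 cf (m x) (Am x Ax).
move=> W hW.
have := hf W hW.
rewrite /within /=.
move=> H1.
have := cm x _ H1.
move=> H2.
change (nbhs x (fun t => A t -> W (f (m t)))).
exact: (filterS (fun t H At => H (Am t At)) H2).
Qed.

Section Clamp.
Variable R : realType.
Definition clamp (t : R) : R := Num.min (Num.max t 0) 1.

Lemma cont_minc (g : R -> R) c : continuous g -> continuous (fun t => Num.min (g t) c).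
Proof.
move=> cg x.
have h1 : {for x, continuous (fun t => (g t, c))}.
  exact: (cvg_pair (cg x) (cvg_cst c)).
exact: (@continuous_comp _ _ _ (fun t => (g t, c)) (fun xy : R * R => Num.min xy.1 xy.2) x h1 (@min_continuous _ R _)).
Qed.

Lemma cont_maxc (g : R -> R) c : continuous g -> continuous (fun t => Num.max (g t) c).
Proof.
move=> cg x.
have h1 : {for x, continuous (fun t => (g t, c))}.
  exact: (cvg_pair (cg x) (cvg_cst c)).
exact: (@continuous_comp _ _ _ (fun t => (g t, c)) (fun xy : R * R => Num.max xy.1 xy.2) x h1 (@max_continuous _ R _)).
Qed.

Lemma clamp_cont (g : R -> R) : continuous g -> continuous (fun t => clamp (g t)).
Proof. by move=> cg; apply: cont_minc; apply: cont_maxc. Qed.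

Lemma clamp01 t : 0 <= clamp t <= 1.
Proof.
rewrite /clamp maxEle minEle.
case: (lerP t 0) => h.
  by rewrite ler01 ler01 lexx.
case: ifP => h1; first by rewrite ltW.
by rewrite ler01 lexx.
Qed.
Lemma clampE t : 0 <= t <= 1 -> clamp t = t.
Proof.
case/andP=> h0 h1; rewrite /clamp maxEle minEle.
case: (lerP t 0) => h.
  have -> : t = 0 by apply/eqP; rewrite eq_le h h0.
  by rewrite ler01.
by rewrite h1.
Qed.
Lemma clamp_le0 t : t <= 0 -> clamp t = 0.
Proof. by move=> h; rewrite /clamp maxEle minEle h ler01. Qed.
Lemma clamp_ge1 t : 1 <= t -> clamp t = 1.
Proof.
move=> h; rewrite /clamp maxEle minEle.
have h0 : ~~ (t <= 0) by rewrite -ltNge; exact: lt_le_trans ltr01 h.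
rewrite (negbTE h0); case: (lerP t 1) => h1 //.
by apply/eqP; rewrite eq_le h1 h.
Qed.
End Clamp.
Section Arc. Variable R : realType.
Lemma I01P (s : R) : I01 s <-> 0 <= s <= 1.
Proof. by rewrite /= in_itv /=. Qed.

Lemma c2 : continuous (fun t : R => 2 * t).
Proof. exact: mulrl_continuous. Qed.
Lemma c2m1 : continuous (fun t : R => 2 * t - 1).
Proof.
move=> t.
apply: cvgD; [exact: c2 | exact: cvg_cst].
Qed.

Lemma arc_extend (Y : set (R * R)) x w u :
  arc_joined Y x w -> (forall s : R, 0 <= s <= 1 -> Y (w + s *: (u - w))) ->
  arc_joined Y x u.
Proof.
case=> f [cf [f0 [f1 fY]]] hseg.
exists (fun t : R => f (clamp (2 * t)) + clamp (2 * t - 1) *: (u - w)).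
split.
  move=> t.
  have hA : {within I01, continuous (f \o (fun s : R => clamp (2 * s)))}.
    apply: within_comp (clamp_cont c2) _ cf.
    move=> s /I01P hs; apply/I01P; exact: clamp01.
  apply: cvgD.
    exact: hA t.
  have h : continuous (fun s : R => clamp (2 * s - 1) *: (u - w)).
    move=> s; apply: cvgZ; [exact: (clamp_cont c2m1) | exact: cvg_cst].
  exact: continuous_subspaceT h t.
split.
  rewrite mulr0 add0r clamp_le0 // clamp_le0 ?lerN10 // scale0r addr0; exact: f0.
split.
  rewrite mulr1 clamp_ge1; last by lra.
  rewrite clamp_ge1; last by lra.
  by rewrite scale1r f1 addrC subrK.
move=> _ [t /I01P /andP[ht0 ht1] <-].
case: (lerP (2 * t) 1) => h.
  rewrite clampE; last by apply/andP; split; lra.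
  rewrite clamp_le0; last by lra.
  rewrite scale0r addr0; apply: fY; exists (2 * t) => //.
  by apply/I01P/andP; split; lra.
rewrite clamp_ge1; last by lra.
by rewrite f1; apply: hseg; exact: clamp01.
Qed.
Lemma ball_convex (z w u : R * R) e s : ball z e w -> ball z e u -> 0 <= s <= 1 ->
  ball z e (w + s *: (u - w)).
Proof.
rewrite -ball_normE /ball_ /= => hw hu /andP[s0 s1].
have -> : z - (w + s *: (u - w)) = (1 - s) *: (z - w) + s *: (z - u).
  case: z w u {hw hu} => [z1 z2] [w1 w2] [u1 u2].
  rewrite /= ; congr pair => /=; rewrite /GRing.scale /=; ring.
rewrite (le_lt_trans (ler_normD _ _)) // !normrZ (ger0_norm s0) ger0_norm ?subr_ge0 //.
have a0 := normr_ge0 (z - w); have b0 := normr_ge0 (z - u).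
set a := `|z - w| in hw a0 *; set b := `|z - u| in hu b0 *.
have h1 : 0 <= (1 - s) * (e - a) by apply: mulr_ge0; lra.
have h2 : 0 <= s * (e - b) by apply: mulr_ge0; lra.
case: (lerP s (1/2)) => hs.
  have h3 : 0 <= (1/2 - s) * (e - a) by apply: mulr_ge0; lra.
  lra.
have h3 : 0 <= (s - 1/2) * (e - b) by apply: mulr_ge0; lra.
lra.
Qed.

Lemma face_interior (X : set (R * R)) x0 z : closed X ->
  closure [set y | arc_joined (~` X) x0 y] z -> ~ X z ->
  (closure [set y | arc_joined (~` X) x0 y])° z.
Proof.
move=> cX cz nXz.
have : nbhs z (~` X) by have := closed_openC cX; rewrite openE; apply.
move=> /nbhs_ballP [e /= e0 he].
have [w [Pw bw]] := cz _ (nbhsx_ballx z _ e0).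
apply/nbhs_ballP; exists e => //= u bu.
apply: subset_closure => /=.
apply: (arc_extend Pw) => s hs.
apply: he; exact: ball_convex.
Qed.

Lemma curve_meets (X F S : set (R * R)) : closed X -> is_closed_face X F ->
  is_curve S -> (S `&` F°) !=set0 -> ~ (S `<=` F°) -> (S `&` X) !=set0.
Proof.
move=> cX [Phi [[x0 [nX0 ->]] ->]] [A [B [g [cg [gS _]]]]] ne nsub.
apply: contrapT => hSX.
have conn : connected S.
  rewrite -gS; apply: connected_continuous_connected => //.
  exact: segment_connected.
apply: nsub.
set F0 := closure [set y | arc_joined (~` X) x0 y].
have E : S `&` F0° = S.
  apply: conn => //.
    by exists F0°; [exact: open_interior|].
  exists F0; first exact: closed_closure.
  rewrite eqEsubset; split => s [Ss Fs]; split => //.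
    exact: interior_subset.
  apply: face_interior => // Xs; apply: hSX; by exists s.
by move=> s Ss; rewrite -E in Ss; case: Ss.
Qed.
End Arc.

Section Main.
Variable R : realType.

Lemma pi_closed (T : finType) (adj : rel T) (phi : T -> set (R * R)) D P pi a b :
  shortest_curve_of adj phi D P pi a b -> closed pi.
Proof.
case=> u [v [_ [_ [_ [f [cf [fpi _]]]]]]].
rewrite -fpi; apply: compact_closed; first exact: norm_hausdorff.
have sc : compact (I01 : set R) := @segment_compact R 0 1.
exact: (@continuous_compact _ _ f I01 cf sc).
Qed.

Lemma pi_cover (T : finType) (adj : rel T) (phi : T -> set (R * R)) D P pi a b :
  shortest_curve_of adj phi D P pi a b ->
  forall z, pi z -> exists p, p \in P /\ phi p z.
Proof. by case=> u [v [_ [_ [_ [f [cf [fpi [_ [_ [cov _]]]]]]]]]]. Qed.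

Lemma rt_contained (T : finType) (adj : rel T) (phi : T -> set (R * R)) F r0 y :
  contained phi F r0 ->
  clos_refl_trans T
      (fun y z => adj y z /\ contained phi F y /\ contained phi F z) r0 y ->
  contained phi F y.
Proof.
move=> c0 h; elim: h c0 => //.
- by move=> a b [_ [_ ?]].
- by move=> a b c _ IH1 _ IH2 ca; apply: IH2; apply: IH1.
Qed.
End Main.

Theorem lemma8 (R : realType) (T : finType) (adj : rel T)
  (phi : T -> set (R * R)) (k : nat)
  (sigma : seq ({ffun 'I_k -> T} * T) -> {ffun 'I_k -> T})
  (c0 : {ffun 'I_k -> T}) (r0 : T)
  (pi1 pi2 : set (R * R)) (a b : R * R) (F : set (R * R))
  (P1 P2 : seq T) (C1 C2 : {set 'I_k}) :
  symmetric adj -> irreflexive adj -> string_rep adj phi ->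
  pi1 `&` pi2 `<=` [set a; b] ->
  is_closed_face (pi1 `|` pi2) F ->
  phi r0 `<=` F -> contained phi F r0 ->
  shortest_curve_of adj phi (component adj phi F r0) P1 pi1 a b ->
  shortest_curve_of adj phi (component adj phi F r0) P2 pi2 a b ->
  #|C1| = 5%N -> #|C2| = 5%N ->
  guards adj sigma c0 r0 C1 (closed_nbhd adj P1) ->
  guards adj sigma c0 r0 C2 (closed_nbhd adj P2) ->
  confined adj sigma c0 r0 (component adj phi F r0).
Proof.
move=> sym irr [curv srep] hab hF phiF cr0 sc1 sc2 _ _ g1 g2.
set D := component adj phi F r0.
have cX : closed (pi1 `|` pi2).
  apply: closedU; [exact: pi_closed sc1 | exact: pi_closed sc2].
have key : forall y x, D y -> adj y x -> y <> x -> ~ D x ->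
    closed_nbhd adj P1 x \/ closed_nbhd adj P2 x.
  move=> y x [cr ry] ayx nyx nDx.
  have cy : contained phi F y := rt_contained cr ry.
  have ncx : ~ contained phi F x.
    move=> cx; apply: nDx; split => //.
    apply: rt_trans ry _; apply: rt_step; split => //; split => //.
  have [q [qy qx]] : phi y `&` phi x !=set0 by apply/(srep y x nyx).1.
  have [z [xz Xz]] := curve_meets cX hF (curv x) (ex_intro _ q (conj qx (cy q qy))) ncx.
  case: Xz => piz.
    have [p [pP phz]] := pi_cover sc1 piz.
    left; have [e|npx] := eqVneq p x; first by left; rewrite -e.
    right; exists p; split => //; apply/(srep p x (elimN eqP npx)).2.
    by exists z.
  have [p [pP phz]] := pi_cover sc2 piz.
  right; have [e|npx] := eqVneq p x; first by left; rewrite -e.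
  right; exists p; split => //; apply/(srep p x (elimN eqP npx)).2.
  by exists z.
move=> c r hcons.
have hc := hcons; case: hc => [hc0 [hr0 hstep]].
have Stp : forall t, Defs.free c r t -> D (r t) -> ~ D (r t.+1) ->
    imm_captured [set: 'I_k] c r t.
  move=> t hfree hD hnD.
  have neq : r t.+1 <> r t by move=> e; apply: hnD; rewrite e.
  have [_ [_ [e|ad]]] := hstep t; first by exfalso; exact: neq.
  have [N1|N2] := key _ _ hD ad (fun e => neq (esym e)) hnD.
    have [i [_ H]] := g1 c r hcons t hfree neq N1.
    by exists i; split => //; rewrite in_setT.
  have [i [_ H]] := g2 c r hcons t hfree neq N2.
  by exists i; split => //; rewrite in_setT.
have Inv : forall t, Defs.free c r t -> D (r t).
  elim => [|t IH] hfree.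
    by rewrite hr0; split => //; apply: rt_refl.
  have hfree' : Defs.free c r t by move=> s hs; apply: hfree; exact: leqW.
  have hD := IH hfree'.
  case: (pselect (D (r t.+1))) => // hnD.
  have [i [_ [H|H]]] := Stp t hfree' hD hnD.
    by have [H1 _] := hfree t.+1 (leqnn _) i; exfalso; apply: H1.
  by have [_ H1] := hfree t.+1 (leqnn _) i; exfalso; apply: H1.
move=> t hfree hnD.
exact: Stp t hfree (Inv t hfree) hnD.
Qed.
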